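(* Let $N$ and $i$ be positive integers such that $N$ is a multiple of both $i$ and $i+1$, and let $q$ be an integer with $N/(i+1)<q\le N/i$ (necessarily $q\ge 2$). Then the map $$F_i\to F_N^{1/q,\,1/(q-1)},\qquad \frac{h}{k}\mapsto \frac{k}{kq-h}$$ (with $h/k$ in lowest terms) is a well-defined, order-preserving bijection.
   Context: For a positive integer $N$, the Farey sequence of order $N$, $F_N$, is the increasing list of all reduced fractions $h/k$ with $0\le h\le k\le N$ and $\gcd(h,k)=1$; it begins with $0/1$ and ends with $1/1$. For integers $1\le b\le a\le N$, $F_N^{1/a,\,1/b}$ denotes the subsequence of $F_N$ consisting of all its fractions lying in the closed interval $[1/a,\,1/b]$. *)

(* Defs.v *)
(* Farey fractions are represented as rationals (type rat);
   the reduced form h/k of r is numq r / denq r. *)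
From HB Require Import structures.
From mathcomp Require Import all_boot all_order all_algebra.
Set Implicit Arguments. Unset Strict Implicit. Unset Printing Implicit Defensive.
Import Order.TTheory GRing.Theory Num.Theory.
Local Open Scope ring_scope.

Definition farey (N : nat) (r : rat) : bool :=
  (0 <= r <= 1) && (denq r <= N%:Z).

Definition farey_sub (N : nat) (a b : int) (r : rat) : bool :=
  farey N r && ((a%:~R)^-1 <= r <= (b%:~R)^-1).

Definition farey_map (q : int) (r : rat) : rat :=
  (denq r)%:~R / ((denq r * q - numq r)%:~R).

(* Main.v *)
Require Import Defs.
From HB Require Import structures.
From mathcomp Require Import all_boot all_order all_algebra.
From mathcomp Require Import zify ring lra.
Import Order.TTheory GRing.Theory Num.Theory.
Local Open Scope ring_scope.
Lemma fm_eq q r : farey_map q r = (q%:~R - r)^-1.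
Proof.
rewrite /farey_map.
have hd : ((denq r)%:~R : rat) != 0 by rewrite intr_eq0 denq_neq0.
have -> : ((denq r * q - numq r)%:~R : rat) = (denq r)%:~R * (q%:~R - r).
  by rewrite rmorphB rmorphM /= numqE; ring.
by rewrite invfM mulrA mulfV // mul1r.
Qed.

Lemma denq_le (x : rat) (d z : int) : 0 < d -> x * d%:~R = z%:~R -> denq x <= d.
Proof.
move=> d0 hx.
have h : numq x * d = z * denq x.
  apply/eqP; rewrite -(eqr_int rat) !rmorphM /= numqE -hx; apply/eqP; ring.
have : (denq x %| d)%Z.
  have cp : coprimez (denq x) (numq x) by rewrite coprimez_sym coprimezE coprime_num_den.
  rewrite -(Gauss_dvdzr _ cp).
  by rewrite h dvdz_mull // dvdzz.
case/dvdzP=> k hk.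
have := denq_gt0 x. move=> hp. clear hx h. move: k hk => k hk. rewrite hk in d0 *. have k0 : 0 < k by rewrite -(pmulr_lgt0 _ hp). rewrite ler_peMl // ?ltW //. 
Qed.
Lemma T (N i : nat) (q : int) :
  (0 < N)%N -> (0 < i)%N -> (i %| N)%N -> (i.+1 %| N)%N ->
  (N%:R / i.+1%:R : rat) < q%:~R -> (q%:~R : rat) <= N%:R / i%:R ->
  exists m : nat, [/\ N = (i * i.+1 * m)%N, (0 < m)%N, (i * m)%:Z < q & q <= (i.+1 * m)%:Z].
Proof.
move=> N0 i0 d1 d2 h1 h2.
have : (i * i.+1 %| N)%N by rewrite Gauss_dvd ?coprimenS ?d1.
case/dvdnP=> m hN.
exists m; rewrite mulnC in hN; split=> //.
- by move: N0; rewrite hN; lia.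
- rewrite -(ltr_int rat); apply: le_lt_trans h1; rewrite hN !natrM /=.
  rewrite le_eqVlt; apply/orP; left; apply/eqP. rewrite -[LHS]/((i * m)%N%:R) natrM. field. 
  by rewrite addrC natr1 pnatr_eq0.
- rewrite -(ler_int rat); apply: le_trans h2 _; rewrite hN !natrM /=.
  rewrite le_eqVlt; apply/orP; left; apply/eqP. rewrite -[RHS]/((i.+1 * m)%N%:R) natrM. field.
  by rewrite pnatr_eq0; lia.
Qed.

Lemma dq_eq q r : ((denq r * q - numq r)%:~R : rat) = (denq r)%:~R * (q%:~R - r).
Proof. by rewrite rmorphB rmorphM /= numqE; ring. Qed.

Theorem theorem2 (N i : nat) (q : int) :
  (0 < N)%N -> (0 < i)%N -> (i %| N)%N -> (i.+1 %| N)%N ->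
  (N%:R / i.+1%:R : rat) < q%:~R -> (q%:~R : rat) <= N%:R / i%:R ->
  [/\ (forall r, farey i r -> farey_sub N q (q - 1) (farey_map q r)),
      (forall r s, farey i r -> farey i s -> r < s ->
                   farey_map q r < farey_map q s)
    & (forall t, farey_sub N q (q - 1) t ->
                 exists2 r, farey i r & farey_map q r = t)].
Proof.
move=> N0 i0 d1 d2 h1 h2.
have [m [hN m0 hq1 hq2]] := @T N i q N0 i0 d1 d2 h1 h2.
have q2 : 2 <= q by lia.
have q2r : (2 : rat) <= q%:~R by rewrite -[2]/(2%:~R) ler_int.
have Nz : (N%:Z) = i%:Z * (i%:Z + 1) * m%:Z by rewrite hN; lia.
split.
- move=> r /andP [/andP [r0 r1] dr].
  have p : (0 : rat) < q%:~R - r by lra.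
  rewrite /farey_sub /farey fm_eq rmorphB /=.
  have p1 : (0 : rat) < q%:~R - 1 by lra.
  apply/andP; split; first (apply/andP; split; first (apply/andP; split)).
  + by rewrite invr_ge0 ltW.
  + by rewrite invf_le1 //; lra.
  + have dpos : 0 < denq r * q - numq r.
      by rewrite -(ltr_int rat) dq_eq mulr_gt0 // ltr0z denq_gt0.
    apply: (le_trans (@denq_le _ _ (denq r) dpos _)).
      by rewrite dq_eq mulrC -mulrA mulfV ?mulr1 // gt_eqF.
    have : 0 <= numq r by rewrite numq_ge0.
    have := denq_gt0 r.
    move=> dg nr; rewrite Nz.
    have e1 : denq r * q <= i%:Z * q by rewrite ler_wpM2r //; clear -q2; lia.
    have e2 : i%:Z * q <= i%:Z * ((i%:Z + 1) * m%:Z) by rewrite ler_wpM2l //; clear -hq2; lia.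
    clear -e1 e2 nr; lia.
  + apply/andP; split.
    * by rewrite lef_pV2 ?posrE //; lra.
    * by rewrite lef_pV2 ?posrE //; lra.
- move=> r s /andP [/andP [r0 r1] _] /andP [/andP [s0 s1] _] rs.
  rewrite !fm_eq ltf_pV2 ?posrE //; lra.
- move=> t /andP [/andP [/andP [t0 t1] dt] /andP [tq tq1]].
  rewrite rmorphB /= in tq1.
  have p1 : (0 : rat) < q%:~R - 1 by lra.
  have qp : (0 : rat) < q%:~R by lra.
  have tp : 0 < t by apply: lt_le_trans tq; rewrite invr_gt0.
  have ti1 : q%:~R - 1 <= t^-1.
    by rewrite -(invrK (q%:~R - 1)) lef_pV2 ?posrE ?invr_gt0.
  have ti2 : t^-1 <= q%:~R.
    by rewrite -(invrK (q%:~R)) lef_pV2 ?posrE ?invr_gt0.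
  exists (q%:~R - t^-1); last by rewrite fm_eq opprB addrC subrK invrK.
  rewrite /farey; apply/andP; split; first by apply/andP; split; lra.
  set a := numq t; set b := denq t.
  have a0 : 0 < a by rewrite numq_gt0.
  have b0 : 0 < b by apply: denq_gt0.
  have ta : (a%:~R : rat) = t * b%:~R by rewrite numqE.
  have ar : (a%:~R : rat) != 0 by rewrite intr_eq0 gt_eqF.
  have hra : (q%:~R - t^-1) * a%:~R = (q * a - b)%:~R.
    rewrite rmorphB rmorphM /= ta. field. by rewrite gt_eqF.
  have hdr := @denq_le _ a _ a0 hra.
  have hab : a * (q - 1) <= b.
    rewrite -(ler_int rat) rmorphM rmorphB /= ta.
    rewrite -mulrA [X in X <= _](_ : _ = t * (q%:~R - 1) * b%:~R); last by ring.
    have tq2 : t * (q%:~R - 1) <= 1.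
      have := ler_wpM2r (ltW p1) tq1; rewrite mulVf ?gt_eqF //.
    rewrite ler_piMl // ler0z ltW //.
  have hbN : b <= N%:Z by [].
  have [ai | ai] := leP a i%:Z; first by apply: le_trans hdr ai.
  have hab2 : a * (q - 1) = b.
    rewrite Nz in hbN.
    have e1 : a * (i%:Z * m%:Z) <= a * (q - 1).
      by apply: ler_wpM2l; [exact: ltW a0 | clear -hq1; lia].
    have e2 : (i%:Z + 1) * (i%:Z * m%:Z) <= a * (i%:Z * m%:Z).
      by apply: ler_wpM2r; [clear; lia | clear -ai; lia].
    clear -e1 e2 hab hbN; lia.
  have -> : q%:~R - t^-1 = 1.
    have : (b%:~R : rat) = a%:~R * (q%:~R - 1) by rewrite -hab2 rmorphM rmorphB.
    rewrite /b => hb. rewrite -[t in t^-1]divq_num_den hb -/a. field.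
    by rewrite ar /=; lra.
  by rewrite (_ : denq 1 = 1) //; lia.
Qed.
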